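(* Consider the fixed-design additive regression setting, the estimator $\hat g$ and tuning parameters described in the context. Let $\bar g=\sum_{j=1}^p\bar g_j\in\mathcal G$, let $C_0>0$, and let $S=\{1\le j\le p:\|\bar g_j\|_n>C_0\lambda_{nj}\}$. Assume the sub-Gaussian noise condition, the entropy condition, and the empirical compatibility condition for this $S$ with constants $\kappa_0>0$, $\xi_0>1$. Then for any $0\le q\le1$ and $A_0>(\xi_0+1)/(\xi_0-1)$, there is a constant $K$ depending only on $(q,A_0,C_0,\xi_0,\kappa_0)$ such that, with probability at least $1-\epsilon$, $$\tfrac12\|\hat g-g^*\|_n^2+\tfrac12\|\hat g-\bar g\|_n^2+(A_0-1)R_n(\hat g-\bar g)\le K\Big\{\|\bar g-g^*\|_n^2+\sum_{j=1}^p\big(\rho_{nj}\|\bar g_j\|_{F,j}+\lambda_{nj}^{2-q}\|\bar g_j\|_n^q\big)\Big\},$$ with the convention $0^0=0$.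
   Context: Data: $(Y_i,X_i)$, $i=1,\dots,n$, $Y_i=g^*(X_i)+\varepsilon_i$, $g^*$ arbitrary. Fixed design: $X_1,\dots,X_n$ deterministic; probabilities refer to the noise. For $j=1,\dots,p$, $x^{(j)}$ is a fixed sub-vector of coordinates of $x$, $\mathcal G_j$ is a vector space of functions of $x^{(j)}$ with semi-norm $\|\cdot\|_{F,j}$, $\mathcal G=\{\sum_jg_j(x^{(j)}):g_j\in\mathcal G_j\}$; each $g\in\mathcal G$ comes with a decomposition $g=\sum_jg_j$ to which component-wise quantities refer. $\|f\|_n^2=n^{-1}\sum_if(X_i)^2$, $\|Y-g\|_n^2=n^{-1}\sum_i\{Y_i-g(X_i)\}^2$, $\langle\varepsilon,f\rangle_n=n^{-1}\sum_i\varepsilon_if(X_i)$; $H(u,\mathcal F,\|\cdot\|)$ is the log covering number at radius $u$. Sub-Gaussian noise condition: $\varepsilon_i$ independent, mean zero, $\max_iD_0E\exp(\varepsilon_i^2/D_0)\le D_1$. $C_1=C_1(D_0,D_1)>0$ is a constant depending only on $(D_0,D_1)$ such that for every $\delta>0$, every class $\mathcal F$ with $\sup_{\mathcal F}\|f\|_n\le\delta$ and every $\psi\ge\int_0^\delta H^{1/2}(u,\mathcal F,\|\cdot\|_n)du$, $P\{\sup_{\mathcal F}|\langle\varepsilon,f\rangle_n|/C_1>n^{-1/2}\psi+\delta\sqrt{t/n}\}\le e^{-t}$ for all $t>0$. Entropy condition: with $\mathcal G_j(\delta)=\{f\in\mathcal G_j:\|f\|_{F,j}+\|f\|_n/\delta\le1\}$,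 $\psi_{nj}(\delta)\ge\int_0^\delta H^{1/2}(u,\mathcal G_j(\delta),\|\cdot\|_n)du$ for $0<\delta\le1$. Tuning and estimator: $0<\epsilon<1$, $0<w_{nj}\le1$, $\gamma_{nj}=n^{-1/2}\psi_{nj}(w_{nj})/w_{nj}$, $\lambda_{nj}=C_1\{\gamma_{nj}+\sqrt{\log(p/\epsilon)/n}\}$, $\rho_{nj}=\lambda_{nj}w_{nj}$, $R_n(g)=\sum_j(\rho_{nj}\|g_j\|_{F,j}+\lambda_{nj}\|g_j\|_n)$; $\hat g=\sum_j\hat g_j$ minimizes $\|Y-g\|_n^2/2+A_0R_n(g)$ over $g\in\mathcal G$ and decompositions. $R_n(\hat g-\bar g)=\sum_j\{\rho_{nj}\|\hat g_j-\bar g_j\|_{F,j}+\lambda_{nj}\|\hat g_j-\bar g_j\|_n\}$. Empirical compatibility condition for $(S,\kappa_0,\xi_0)$: for all $f_j\in\mathcal G_j$, $f=\sum_jf_j$, if $\sum_{j=1}^p\lambda_{nj}w_{nj}\|f_j\|_{F,j}+\sum_{j\notin S}\lambda_{nj}\|f_j\|_n\le\xi_0\sum_{j\in S}\lambda_{nj}\|f_j\|_n$ then $\kappa_0^2(\sum_{j\in S}\lambda_{nj}\|f_j\|_n)^2\le(\sum_{j\in S}\lambda_{nj}^2)\|f\|_n^2$. *)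

(* Defs.v *)
From HB Require Import structures.
From mathcomp Require Import all_boot all_order all_algebra.
From mathcomp Require Import all_classical all_reals all_analysis.
Set Implicit Arguments. Unset Strict Implicit. Unset Printing Implicit Defensive.
Import Order.TTheory GRing.Theory Num.Theory.
Local Open Scope ring_scope.
Local Open Scope classical_set_scope.

Section Defs.
Context {R : realType}.

Definition emp2 (n : nat) (U : Type) (Z : 'I_n -> U) (f : U -> R) : R :=
  n%:R^-1 * \sum_(i < n) f (Z i) ^+ 2.
Definition empnorm (n : nat) (U : Type) (Z : 'I_n -> U) (f : U -> R) : R :=
  Num.sqrt (emp2 Z f).

Definition subvec (D d : nat) (s : 'I_d -> 'I_D) (x : 'rV[R]_D) : 'rV[R]_d :=
  \row_(k < d) x ord0 (s k).

Definition fun_subspace (U : Type) (G : set (U -> R)) : Prop :=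
  G (fun _ => 0) /\
  (forall f g, G f -> G g -> G (fun x => f x + g x)) /\
  (forall (a : R) f, G f -> G (fun x => a * f x)).

Definition seminorm_on (U : Type) (G : set (U -> R)) (N : (U -> R) -> R) : Prop :=
  (forall f, G f -> 0 <= N f) /\
  (forall (a : R) f, G f -> N (fun x => a * f x) = `|a| * N f) /\
  (forall f g, G f -> G g -> N (fun x => f x + g x) <= N f + N g).

Definition emp_covered_by (n : nat) (U : Type) (Z : 'I_n -> U) (F : set (U -> R))
  (u : R) (m : nat) : Prop :=
  exists c : 'I_m -> (U -> R),
    forall f, F f -> exists k : 'I_m, empnorm Z (fun x => f x - c k x) <= u.

(** log covering number H(u, F, ||.||_n)  (+oo if no finite cover) *)
Definition log_cover (n : nat) (U : Type) (Z : 'I_n -> U) (F : set (U -> R))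
  (u : R) : \bar R :=
  ereal_inf [set (ln (m%:R : R))%:E | m in [set m | emp_covered_by Z F u m]].

Definition esqrt (x : \bar R) : \bar R :=
  match x with
  | EFin r => (Num.sqrt r)%:E
  | EPInf => +oo%E
  | ENInf => 0%E
  end.

Definition entropy_integral (n : nat) (U : Type) (Z : 'I_n -> U)
  (F : set (U -> R)) (delta : R) : \bar R :=
  (\int[@lebesgue_measure R]_(u in [set u : R | (0 < u <= delta)%R])
      esqrt (log_cover Z F u))%E.

Definition mutually_independent (d : measure_display) (Omega : measurableType d)
  (P : probability Omega R) (n : nat) (eps : 'I_n -> Omega -> R) : Prop :=
  forall B : 'I_n -> set R, (forall i, measurable (B i)) ->
    P (\bigcap_(i in [set: 'I_n]) (eps i @^-1` B i)) =
    (\prod_(i < n) P (eps i @^-1` B i))%E.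

Definition subgaussian_noise (d : measure_display) (Omega : measurableType d)
  (P : probability Omega R) (n : nat) (eps : 'I_n -> Omega -> R) (D0 D1 : R) : Prop :=
  0 < D0 /\
  (forall i, measurable_fun setT (eps i)) /\
  mutually_independent P eps /\
  (forall i, P.-integrable setT (fun w => (eps i w)%:E)) /\
  (forall i, (\int[P]_w (eps i w)%:E = 0)%E) /\
  (forall i, (D0%:E * \int[P]_w (expR (eps i w ^+ 2 / D0))%:E <= D1%:E)%E).

(** the maximal inequality defining C_1 (for this noise):
    for every delta > 0, every class F with sup ||f||_n <= delta, every psi
    dominating the entropy integral and every t > 0,
    P{ sup_F |<eps,f>_n| / C1 > n^{-1/2} psi + delta sqrt(t/n) } <= e^{-t},
    i.e. there is an event of probability >= 1 - e^{-t} on which the sup is small. *)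
Definition noise_maximal_ineq (d : measure_display) (Omega : measurableType d)
  (P : probability Omega R) (n D : nat) (X : 'I_n -> 'rV[R]_D)
  (eps : 'I_n -> Omega -> R) (C1 : R) : Prop :=
  forall (delta : R) (F : set ('rV[R]_D -> R)) (psi t : R),
    0 < delta -> (forall f, F f -> empnorm X f <= delta) ->
    (entropy_integral X F delta <= psi%:E)%E -> 0 < t ->
    exists E : set Omega, measurable E /\ ((1 - expR (- t))%:E <= P E)%E /\
      forall w, E w -> forall f, F f ->
        `| n%:R^-1 * \sum_(i < n) eps i w * f (X i) | / C1 <=
           (Num.sqrt n%:R)^-1 * psi + delta * Num.sqrt (t / n%:R).

Definition Gj_delta (n : nat) (U : Type) (Z : 'I_n -> U) (G : set (U -> R))
  (NF : (U -> R) -> R) (delta : R) : set (U -> R) :=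
  [set f | G f /\ NF f + empnorm Z f / delta <= 1].

Definition lambda_n (n p : nat) (C1 epsilon : R) (psi : 'I_p -> R -> R)
  (w : 'I_p -> R) (j : 'I_p) : R :=
  C1 * ((Num.sqrt n%:R)^-1 * psi j (w j) / w j
        + Num.sqrt (ln (p%:R / epsilon) / n%:R)).
Definition rho_n (n p : nat) (C1 epsilon : R) (psi : 'I_p -> R -> R)
  (w : 'I_p -> R) (j : 'I_p) : R :=
  lambda_n n C1 epsilon psi w j * w j.

Definition pow00 (a x : R) : R := if a == 0 then 0 else powR a x.

Definition design_j (n D p : nat) (d : 'I_p -> nat) (sel : forall j, 'I_(d j) -> 'I_D)
  (X : 'I_n -> 'rV[R]_D) (j : 'I_p) : 'I_n -> 'rV[R]_(d j) :=
  fun i => subvec (sel j) (X i).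

Definition add_comp (D p : nat) (d : 'I_p -> nat) (sel : forall j, 'I_(d j) -> 'I_D)
  (g : forall j, 'rV[R]_(d j) -> R) : 'rV[R]_D -> R :=
  fun x => \sum_(j < p) g j (subvec (sel j) x).

Definition cdiff (p : nat) (d : 'I_p -> nat) (g h : forall j, 'rV[R]_(d j) -> R) :
  forall j, 'rV[R]_(d j) -> R := fun j x => g j x - h j x.

Definition penalty (n D p : nat) (d : 'I_p -> nat) (sel : forall j, 'I_(d j) -> 'I_D)
  (X : 'I_n -> 'rV[R]_D) (NF : forall j, ('rV[R]_(d j) -> R) -> R)
  (lam rho : 'I_p -> R) (g : forall j, 'rV[R]_(d j) -> R) : R :=
  \sum_(j < p) (rho j * NF j (g j) + lam j * empnorm (design_j sel X j) (g j)).

End Defs.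

(* Main.v *)
Require Import Defs.
From HB Require Import structures.
From mathcomp Require Import all_boot all_order all_algebra.
From mathcomp Require Import all_classical all_reals all_analysis.
From mathcomp Require Import ring lra.
Import Order.TTheory GRing.Theory Num.Theory.
Local Open Scope ring_scope.
Local Open Scope classical_set_scope.

Section Emp.
Context {R : realType}.
Variables (n : nat) (U : Type) (Z : 'I_n -> U).

Lemma eq_emp2 {f g : U -> R} : (forall i, f (Z i) = g (Z i)) -> emp2 Z f = emp2 Z g.
Proof. by move=> h; rewrite /emp2; congr (_ * _); apply: eq_bigr => i _; rewrite h. Qed.

Lemma eq_empnorm {f g : U -> R} : (forall i, f (Z i) = g (Z i)) -> empnorm Z f = empnorm Z g.
Proof. by move=> h; rewrite /empnorm (eq_emp2 h). Qed.

Lemma emp2_ge0 (f : U -> R) : 0 <= emp2 Z f.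
Proof.
rewrite /emp2 mulr_ge0 ?invr_ge0 ?ler0n //; apply: sumr_ge0 => i _; exact: sqr_ge0.
Qed.

Lemma empnorm_ge0 (f : U -> R) : 0 <= empnorm Z f.
Proof. exact: sqrtr_ge0. Qed.

Lemma empnorm_sqr (f : U -> R) : empnorm Z f ^+ 2 = emp2 Z f.
Proof. by rewrite /empnorm sqr_sqrtr // emp2_ge0. Qed.

Lemma emp2_scale (a : R) (f : U -> R) : emp2 Z (fun x => a * f x) = a ^+ 2 * emp2 Z f.
Proof.
rewrite /emp2 mulrCA; congr (_ * _); rewrite mulr_sumr; apply: eq_bigr => i _.
by rewrite exprMn.
Qed.

Lemma empnorm_scale (a : R) (f : U -> R) :
  empnorm Z (fun x => a * f x) = `|a| * empnorm Z f.
Proof. by rewrite /empnorm emp2_scale sqrtrM ?sqr_ge0 // sqrtr_sqr. Qed.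

Lemma empnorm_eq0 (f : U -> R) : (0 < n)%N -> empnorm Z f = 0 -> forall i, f (Z i) = 0.
Proof.
move=> n0 h i; have e : emp2 Z f = 0 by rewrite -empnorm_sqr h expr0n.
move: e; rewrite /emp2 => /eqP; rewrite mulf_eq0 invr_eq0 pnatr_eq0.
have -> : (n == 0%N) = false by case: n n0 Z.
move=> /= /eqP e.
apply/eqP; rewrite -sqrf_eq0; apply/eqP; have HH := psumr_eq0P (fun j _ => sqr_ge0 _) e; by apply: HH.
Qed.

Lemma CS (F G : 'I_n -> R) :
  \sum_(i < n) F i * G i <= Num.sqrt (\sum_(i < n) F i ^+ 2) * Num.sqrt (\sum_(i < n) G i ^+ 2).
Proof.
set A := \sum_(i < n) F i ^+ 2; set B := \sum_(i < n) G i ^+ 2.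
have A0 : 0 <= A by apply: sumr_ge0 => i _; exact: sqr_ge0.
have B0 : 0 <= B by apply: sumr_ge0 => i _; exact: sqr_ge0.
have zero (H : 'I_n -> R) : \sum_(i < n) H i ^+ 2 = 0 -> forall i, H i = 0.
  move=> e i.
  apply/eqP; rewrite -sqrf_eq0; apply/eqP; have HH := psumr_eq0P (fun j _ => sqr_ge0 _) e; by apply: HH.
have [a0|] := eqVneq (Num.sqrt A) 0.
  have : A = 0 by move: a0 => /eqP; rewrite sqrtr_eq0 => h; apply/eqP; rewrite eq_le h A0.
  move=> /zero h; rewrite big1 ?a0 ?mul0r // => i _; by rewrite h mul0r.
have [b0|] := eqVneq (Num.sqrt B) 0.
  have : B = 0 by move: b0 => /eqP; rewrite sqrtr_eq0 => h; apply/eqP; rewrite eq_le h B0.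
  move=> /zero h; rewrite big1 ?b0 ?mulr0 // => i _; by rewrite h mulr0.
move=> bn0 an0.
set a := Num.sqrt A in an0 *; set b := Num.sqrt B in bn0 *.
have ap : 0 < a by rewrite lt_neqAle eq_sym an0 sqrtr_ge0.
have bp : 0 < b by rewrite lt_neqAle eq_sym bn0 sqrtr_ge0.
have aA : a ^+ 2 = A by rewrite sqr_sqrtr.
have bB : b ^+ 2 = B by rewrite sqr_sqrtr.
have key : 2 * a * b * \sum_(i < n) F i * G i <= b ^+ 2 * A + a ^+ 2 * B.
  rewrite mulr_sumr /A /B !mulr_sumr -big_split /=; apply: ler_sum => i _.
  have := sqr_ge0 (b * F i - a * G i); nra.
have abp : 0 < a * b by apply: mulr_gt0.
rewrite -aA -bB in key.
have : 2 * (a * b) * \sum_(i < n) F i * G i <= 2 * (a * b) * (a * b).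
  by rewrite mulrA; apply: (le_trans key); rewrite le_eqVlt; apply/orP; left; apply/eqP; ring.
by rewrite ler_pM2l ?mulr_gt0 //.
Qed.

Lemma emp_CS (f g : U -> R) :
  n%:R^-1 * \sum_(i < n) f (Z i) * g (Z i) <= empnorm Z f * empnorm Z g.
Proof.
set c := Num.sqrt (n%:R^-1 : R).
have c2 : c ^+ 2 = n%:R^-1 by rewrite sqr_sqrtr // invr_ge0 ler0n.
have := CS (fun i => c * f (Z i)) (fun i => c * g (Z i)).
have -> : \sum_(i < n) c * f (Z i) * (c * g (Z i)) = n%:R^-1 * \sum_(i < n) f (Z i) * g (Z i).
  by rewrite mulr_sumr; apply: eq_bigr => i _; rewrite -c2; ring.
have E (h : U -> R) : \sum_(i < n) (c * h (Z i)) ^+ 2 = emp2 Z h.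
  by rewrite /emp2 mulr_sumr; apply: eq_bigr => i _; rewrite exprMn c2.
by rewrite !E.
Qed.

Lemma emp2_add {f g h : U -> R} : (forall i, h (Z i) = f (Z i) + g (Z i)) ->
  emp2 Z h = emp2 Z f + emp2 Z g + 2 * (n%:R^-1 * \sum_(i < n) f (Z i) * g (Z i)).
Proof.
move=> hfg; rewrite /emp2 mulrCA -!mulrDr; congr (_ * _).
rewrite mulr_sumr -!big_split /=; apply: eq_bigr => i _; rewrite hfg; ring.
Qed.

Lemma empnorm_tri {f g h : U -> R} : (forall i, h (Z i) = f (Z i) + g (Z i)) ->
  empnorm Z h <= empnorm Z f + empnorm Z g.
Proof.
move=> hfg.
have h1 : emp2 Z h <= (empnorm Z f + empnorm Z g) ^+ 2.
  rewrite (emp2_add hfg) sqrrD !empnorm_sqr.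
  have := emp_CS f g; lra.
rewrite /empnorm -(@ger0_norm _ (Num.sqrt (emp2 Z f) + Num.sqrt (emp2 Z g))).
  by rewrite -sqrtr_sqr; apply: ler_wsqrtr.
by apply: addr_ge0; apply: sqrtr_ge0.
Qed.

Lemma emp2_add_le {f g h : U -> R} : (forall i, h (Z i) = f (Z i) + g (Z i)) ->
  emp2 Z h <= 2 * emp2 Z f + 2 * emp2 Z g.
Proof.
move=> hfg; rewrite /emp2 (eq_bigr (fun i => (f (Z i) + g (Z i)) ^+ 2)); last by move=> i _; rewrite hfg.
have np : 0 <= (n%:R^-1 : R) by rewrite invr_ge0 ler0n.
rewrite mulrCA [2 * (_ * _)]mulrCA -mulrDr; apply: ler_wpM2l => //.
rewrite !mulr_sumr -big_split /=; apply: ler_sum => i _.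
have := sqr_ge0 (f (Z i) - g (Z i)); nra.
Qed.

End Emp.


Lemma log_cover_le {R : realType} n D d (X : 'I_n -> 'rV[R]_D) (s : 'I_d -> 'I_D)
  (Gs : set ('rV[R]_d -> R)) u :
  (log_cover X [set h | exists f, Gs f /\ h = (fun x => f (subvec s x))] u
   <= log_cover (fun i => subvec s (X i)) Gs u)%E.
Proof.
rewrite /log_cover; apply: le_ereal_inf => _ [m Hm <-]; exists m => //.
move: Hm => [c Hc]; exists (fun k x => c k (subvec s x)) => h [f [Gf ->]].
by have [k Hk] := Hc f Gf; exists k.
Qed.

Lemma esqrt_ge0 {R : realType} (x : \bar R) : (0 <= esqrt x)%E.
Proof. by case: x => [r| |] //=; rewrite lee_fin sqrtr_ge0. Qed.

Lemma esqrt_mono {R : realType} (x y : \bar R) : (x <= y)%E -> (esqrt x <= esqrt y)%E.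
Proof.
case: x => [r| |]; case: y => [s| |] //=; rewrite ?lee_fin;
  try by move=> *; rewrite ?leey ?sqrtr_ge0.
by move=> h; apply: ler_wsqrtr.
Qed.

Lemma entropy_mono {R : realType} n1 n2 (U1 U2 : Type) (Z1 : 'I_n1 -> U1) (Z2 : 'I_n2 -> U2)
  (F1 : set (U1 -> R)) (F2 : set (U2 -> R)) delta :
  (forall u, (log_cover Z1 F1 u <= log_cover Z2 F2 u)%E) ->
  (entropy_integral Z1 F1 delta <= entropy_integral Z2 F2 delta)%E.
Proof.
move=> H; rewrite /entropy_integral !ge0_integralE; try by move=> *; exact: esqrt_ge0.
apply: le_ereal_sup => _ [h hle <-]; exists h => //= x.
apply: le_trans (hle x) _; apply: lee_restrict => y _; exact/esqrt_mono/H.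
Qed.

Lemma entropy_ge0 {R : realType} n (U : Type) (Z : 'I_n -> U) (F : set (U -> R)) delta :
  (0 <= entropy_integral Z F delta)%E.
Proof. by apply: integral_ge0 => x _; exact: esqrt_ge0. Qed.


Lemma measure_bigU_le {R : realType} (dsp : measure_display) (T : measurableType dsp)
  (mu : {measure set T -> \bar R}) (I : Type) (s : seq I) (F : I -> set T) :
  (forall i, measurable (F i)) ->
  (mu (\big[setU/set0]_(i <- s) F i) <= \sum_(i <- s) mu (F i))%E.
Proof.
move=> mF; elim: s => [|i s IH]; first by rewrite !big_nil measure0.
rewrite !big_cons; apply: le_trans (measureU2 _ _ _) _ => //.
  by apply: bigsetU_measurable.
exact: leeD.
Qed.

Lemma in_bigU (T : Type) (I : eqType) (s : seq I) (F : I -> set T) i x :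
  i \in s -> F i x -> (\big[setU/set0]_(j <- s) F j) x.
Proof.
elim: s => //= k s IH; rewrite in_cons big_cons => /orP [/eqP <-|/IH H] Fx.
  by left.
by right; exact: H.
Qed.

Lemma lam_gt0 {R : realType} (n p : nat) (C1 epsilon : R) (psi : 'I_p -> R -> R)
  (w : 'I_p -> R) j : (0 < n)%N -> 0 < C1 -> 0 < epsilon < 1 -> 0 < w j ->
  0 <= psi j (w j) -> 0 < lambda_n n C1 epsilon psi w j.
Proof.
move=> n0 C0 /andP[e0 e1] w0 ps0; rewrite /lambda_n; apply: mulr_gt0 => //.
have A : 0 <= (Num.sqrt n%:R)^-1 * psi j (w j) / w j.
  apply: divr_ge0; last exact: ltW.
  apply: mulr_ge0 => //; rewrite invr_ge0; exact: sqrtr_ge0.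
have B : 0 < Num.sqrt (ln (p%:R / epsilon) / n%:R).
  rewrite sqrtr_gt0 divr_gt0 ?ltr0n // ln_gt0 //.
  have p1 : (1 <= p)%N by case: p {psi w w0 ps0 A} j => [[]|].
  rewrite ltr_pdivlMr // mul1r; apply: lt_le_trans e1 _; by rewrite ler1n.
lra.
Qed.

Lemma comp_bound {R : realType} n D dj (X : 'I_n -> 'rV[R]_D) (s : 'I_dj -> 'I_D)
  (Gs : set ('rV[R]_dj -> R)) (N : ('rV[R]_dj -> R) -> R) (e : 'I_n -> R)
  (C1 wj lamj B : R) :
  (0 < n)%N -> fun_subspace Gs -> seminorm_on Gs N -> 0 < C1 -> 0 < wj -> 0 <= lamj ->
  C1 * B = lamj * wj ->
  (forall h, [set h | exists f, Gj_delta (fun i => subvec s (X i)) Gs N wj f /\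
                h = (fun x => f (subvec s x))] h ->
     `| n%:R^-1 * \sum_(i < n) e i * h (X i)| / C1 <= B) ->
  forall f, Gs f ->
  `| n%:R^-1 * \sum_(i < n) e i * f (subvec s (X i)) |
    <= lamj * wj * N f + lamj * empnorm (fun i => subvec s (X i)) f.
Proof.
move=> n0 [G0 [GD GZ]] [N0 [NZ ND]] C1p wp l0 CB HB f Gf.
set Z := fun i => subvec s (X i).
set S := n%:R^-1 * \sum_(i < n) e i * f (subvec s (X i)).
set sc := N f + empnorm Z f / wj.
have e0 : 0 <= empnorm Z f by exact: empnorm_ge0.
have Nf0 := N0 f Gf.
have ew0 : 0 <= empnorm Z f / wj by rewrite divr_ge0 // ltW.
have [sc0|scn0] := eqVneq sc 0.
  have ez : empnorm Z f = 0.
    have : empnorm Z f / wj = 0 by rewrite /sc in sc0; lra.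
    by move/eqP; rewrite mulf_eq0 invr_eq0 (gt_eqF wp) orbF => /eqP.
  have -> : S = 0.
    rewrite /S big1 ?mulr0 // => i _.
    by rewrite (@empnorm_eq0 R n _ Z f n0 ez i) mulr0.
  rewrite normr0 ez mulr0 addr0; apply: mulr_ge0 => //; apply: mulr_ge0 => //; exact: ltW.
have scp : 0 < sc by rewrite lt_neqAle eq_sym scn0 /sc addr_ge0.
set g := fun y => sc^-1 * f y.
have Gg : Gs g by apply: GZ.
have Ng : N g = sc^-1 * N f by rewrite /g NZ // ger0_norm // invr_ge0 ltW.
have Eg : empnorm Z g = sc^-1 * empnorm Z f.
  by rewrite /g empnorm_scale ger0_norm // invr_ge0 ltW.
have Fg : Gj_delta Z Gs N wj g.
  split => //; rewrite Ng Eg.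
  have -> : sc^-1 * N f + sc^-1 * empnorm Z f / wj = sc^-1 * sc by rewrite /sc; ring.
  by rewrite mulVf // gt_eqF.
have := HB (fun x => g (subvec s x)) (ex_intro _ g (conj Fg erefl)).
have -> : n%:R^-1 * \sum_(i < n) e i * g (subvec s (X i)) = sc^-1 * S.
  rewrite /S /g mulrCA; congr (_ * _); rewrite mulr_sumr; apply: eq_bigr => i _; ring.
have inv0 : 0 <= sc^-1 by rewrite invr_ge0 ltW.
rewrite normrM (ger0_norm inv0) => H.
have scn : sc != 0 by rewrite gt_eqF.
have C1n : C1 != 0 by rewrite gt_eqF.
have -> : `|S| = sc * C1 * (sc^-1 * `|S| / C1).
  transitivity ((sc / sc) * (C1 / C1) * `|S|); last by ring.
  by rewrite !divff // !mul1r.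
have : sc * C1 * (sc^-1 * `|S| / C1) <= sc * C1 * B.
  by apply: ler_wpM2l => //; apply: mulr_ge0; exact: ltW.
move=> H2; apply: (le_trans H2).
rewrite -mulrA CB /sc.
have -> : (N f + empnorm Z f / wj) * (lamj * wj) = lamj * wj * N f + lamj * (empnorm Z f / wj * wj) by ring.
by rewrite divfK // gt_eqF.
Qed.

Lemma noise_event {R : realType} (n p D : nat) (d : 'I_p -> nat)
  (sel : forall j, 'I_(d j) -> 'I_D) (X : 'I_n -> 'rV[R]_D)
  (G : forall j, set ('rV[R]_(d j) -> R))
  (NF : forall j, ('rV[R]_(d j) -> R) -> R)
  (dsp : measure_display) (Omega : measurableType dsp) (P : probability Omega R)
  (eps : 'I_n -> Omega -> R) (C1 epsilon : R) (w : 'I_p -> R) (psi : 'I_p -> R -> R) :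
  (0 < n)%N -> (0 < p)%N ->
  (forall j, fun_subspace (G j)) -> (forall j, seminorm_on (G j) (NF j)) ->
  0 < C1 -> noise_maximal_ineq P X eps C1 ->
  (forall j delta, 0 < delta <= 1 ->
     (entropy_integral (design_j sel X j) (Gj_delta (design_j sel X j) (G j) (NF j) delta) delta
       <= (psi j delta)%:E)%E) ->
  0 < epsilon < 1 -> (forall j, 0 < w j <= 1) ->
  exists E : set Omega, measurable E /\ ((1 - epsilon)%:E <= P E)%E /\
  forall omega, E omega -> forall f : forall j, 'rV[R]_(d j) -> R, (forall j, G j (f j)) ->
    `| n%:R^-1 * \sum_(i < n) eps i omega * add_comp sel f (X i) |
      <= penalty sel X NF (lambda_n n C1 epsilon psi w) (rho_n n C1 epsilon psi w) f.
Proof.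
move=> n0 p0 Gsub Gsn C1p Hmax Hent /andP[e0 e1] Hw.
set t := ln (p%:R / epsilon).
have pe1 : 1 < p%:R / epsilon.
  rewrite ltr_pdivlMr // mul1r; apply: lt_le_trans e1 _; by rewrite ler1n.
have tp : 0 < t by rewrite /t ln_gt0.
have et : expR (- t) = epsilon / p%:R.
  rewrite expRN /t lnK ?posrE ?(lt_trans ltr01) // invf_div //.
set lam := lambda_n n C1 epsilon psi w.
have psi0 j : 0 <= psi j (w j).
  have := Hent j (w j) (Hw j); rewrite -lee_fin; apply: le_trans; exact: entropy_ge0.
have lamp j : 0 < lam j.
  by apply: lam_gt0 => //; [rewrite e0 e1|case/andP: (Hw j)].
have step j : exists Ej : set Omega, measurable Ej /\ ((1 - expR (- t))%:E <= P Ej)%E /\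
    forall omega, Ej omega -> forall f, G j f ->
      `| n%:R^-1 * \sum_(i < n) eps i omega * f (subvec (sel j) (X i)) |
        <= lam j * w j * NF j f + lam j * empnorm (design_j sel X j) f.
  have /andP[wp w1] := Hw j.
  pose F := [set h | exists f, Gj_delta (fun i => subvec (sel j) (X i)) (G j) (NF j) (w j) f /\
                h = (fun x => f (subvec (sel j) x))].
  have Fb : forall h, F h -> empnorm X h <= w j.
    move=> h [f [[Gf Hf] ->]].
    have N0 := (Gsn j).1 f Gf.
    have : empnorm (fun i => subvec (sel j) (X i)) f / w j <= 1 by lra.
    by rewrite ler_pdivrMr // mul1r.
  have Fe : (entropy_integral X F (w j) <= (psi j (w j))%:E)%E.
    apply: le_trans (Hent j (w j) (Hw j)).
    apply: entropy_mono => u; exact: log_cover_le.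
  have [Ej [mEj [PEj HEj]]] := Hmax (w j) F (psi j (w j)) t wp Fb Fe tp.
  exists Ej; split => //; split => // omega Eo.
  apply: (@comp_bound R n D (d j) X (sel j) (G j) (NF j) (fun i => eps i omega) C1 (w j) (lam j)
     ((Num.sqrt n%:R)^-1 * psi j (w j) + w j * Num.sqrt (t / n%:R))) => //.
  - exact: ltW.
  - rewrite /lam /lambda_n -/t; field.
    by rewrite (gt_eqF wp) /= sqrtr_eq0 -ltNge ltr0n.
  - by move=> h Fh; apply: HEj.
have [Ef HEf] := choice step.
set U := \big[setU/set0]_(j <- index_enum 'I_p) ~` Ef j.
have mU : measurable U by apply: bigsetU_measurable => j _; apply: measurableC; case: (HEf j).
exists (~` U); split; first exact: measurableC.
split.
  rewrite probability_setC //.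
  have PU : (P U <= epsilon%:E)%E.
    apply: le_trans (@measure_bigU_le R _ _ P _ (index_enum 'I_p) (fun j => ~` Ef j) _) _.
      by move=> j; apply: measurableC; case: (HEf j).
    have : (\sum_(j <- index_enum 'I_p) P (~` Ef j) <= \sum_(j <- index_enum 'I_p) (epsilon / p%:R)%:E)%E.
      apply: lee_sum => j _; have [mE [PE _]] := HEf j.
      rewrite probability_setC // -et.
      rewrite (_ : (expR (- t))%:E = 1 - (1 - expR (- t))%:E)%E; first exact: leeB.
      by rewrite -EFinB; congr (_%:E); ring.
    move=> H; apply: le_trans H _.
    rewrite sumEFin lee_fin sumr_const card_ord -[(_ / _) *+ p]mulr_natr.
    by rewrite divfK // pnatr_eq0 -lt0n.
  by rewrite EFinB; apply: leeB.
move=> omega HU f Gf.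
have HE j : Ef j omega.
  apply: contrapT => nE; apply: HU; apply: (@in_bigU _ _ (index_enum 'I_p) (fun j => ~` Ef j) j omega) => //; exact: mem_index_enum.
rewrite /add_comp.
have -> : n%:R^-1 * \sum_(i < n) eps i omega * (\sum_(j < p) f j (subvec (sel j) (X i)))
    = \sum_(j < p) n%:R^-1 * \sum_(i < n) eps i omega * f j (subvec (sel j) (X i)).
  rewrite (eq_bigr (fun i => \sum_(j < p) eps i omega * f j (subvec (sel j) (X i)))); last first.
    by move=> i _; rewrite mulr_sumr.
  by rewrite exchange_big mulr_sumr.
apply: le_trans (ler_norm_sum _ _ _) _.
rewrite /penalty; apply: ler_sum => j _.
have [_ [_ Hj]] := HEf j.
exact: Hj omega (HE j) (f j) (Gf j).
Qed.


Lemma pow00_ge0 {R : realType} (a x : R) : 0 <= pow00 a x.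
Proof. by rewrite /pow00; case: ifP => _ //; exact: powR_ge0. Qed.

Lemma pow_notS {R : realType} (lam x C0 q : R) : 0 < lam -> 0 <= x -> x <= C0 * lam ->
  0 < C0 -> 0 <= q <= 1 ->
  lam * x <= C0 `^ (1 - q) * (pow00 lam (2 - q) * pow00 x q).
Proof.
move=> lp x0 xC C0p /andP[q0 q1].
have [->|xn0] := eqVneq x 0; first by rewrite /pow00 eqxx !mulr0.
have xp : 0 < x by rewrite lt_neqAle eq_sym xn0.
rewrite /pow00 (gt_eqF lp) (gt_eqF xp).
have e1 : lam `^ (2 - q) = lam * lam `^ (1 - q).
  have -> : 2 - q = 1 + (1 - q) by ring.
  rewrite powRD; last by rewrite (gt_eqF lp) /= implybT.
  by rewrite powRr1 // ltW.
have e2 : x = x `^ q * x `^ (1 - q).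
  rewrite -powRD; last by rewrite (gt_eqF xp) /= implybT.
  have -> : q + (1 - q) = 1 by ring.
  by rewrite powRr1 // ltW.
have e3 : lam `^ (1 - q) * (x / lam) `^ (1 - q) = x `^ (1 - q).
  rewrite -powRM; [|exact: ltW|by rewrite divr_ge0 // ltW].
  by rewrite mulrCA divff ?gt_eqF // mulr1.
have m : (x / lam) `^ (1 - q) <= C0 `^ (1 - q).
  apply: ge0_ler_powR.
  - lra.
  - by rewrite nnegrE divr_ge0 // ltW.
  - by rewrite nnegrE ltW.
  - by rewrite ler_pdivrMr.
rewrite e1 {1}e2 -e3.
have : 0 <= lam * lam `^ (1 - q) * x `^ q.
  by apply: mulr_ge0; [apply: mulr_ge0; [exact: ltW|exact: powR_ge0]|exact: powR_ge0].
move: m; move: ((x / lam) `^ (1 - q)) (C0 `^ (1 - q)) => y z m pos.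
have := ler_wpM2r pos m; move=> H.
apply: (le_trans _ (le_trans H _)); rewrite le_eqVlt; apply/orP; left; apply/eqP; ring.
Qed.

Lemma pow_S {R : realType} (lam x C0 q : R) : 0 < lam -> C0 * lam < x ->
  0 < C0 -> 0 <= q ->
  lam ^+ 2 <= (C0^-1) `^ q * (pow00 lam (2 - q) * pow00 x q).
Proof.
move=> lp xC C0p q0.
have xp : 0 < x by apply: le_lt_trans xC; rewrite mulr_ge0 ?ltW.
rewrite /pow00 (gt_eqF lp) (gt_eqF xp).
have e1 : lam ^+ 2 = lam `^ (2 - q) * lam `^ q.
  rewrite -powRD; last by rewrite (gt_eqF lp) /= implybT.
  have -> : 2 - q + q = 2%:R by ring.
  by rewrite powR_mulrn // ltW.
have m : lam `^ q <= (C0^-1) `^ q * x `^ q.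
  rewrite -powRM; [|by rewrite invr_ge0 ltW|exact: ltW].
  apply: ge0_ler_powR => //.
  - by rewrite nnegrE ltW.
  - by rewrite nnegrE mulr_ge0 ?invr_ge0 ?ltW.
  - by rewrite mulrC ler_pdivlMr // mulrC ltW.
rewrite e1.
have := ler_wpM2l (powR_ge0 lam (2 - q)) m.
move=> H; apply: (le_trans H); rewrite le_eqVlt; apply/orP; left; apply/eqP; ring.
Qed.


Lemma det {R : realType} (A0 xi0 kappa0 : R) : 1 < xi0 -> 0 < kappa0 ->
  (xi0 + 1) / (xi0 - 1) < A0 ->
  exists K0 : R, 0 <= K0 /\ forall h a dd U T B M : R,
  0 <= h -> 0 <= a -> 0 <= dd -> 0 <= U -> 0 <= T -> 0 <= B -> 0 <= M ->
  h / 2 + (A0 - 1) * U <= a / 2 + 2 * A0 * B + (A0 + 1) * T ->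
  (U <= xi0 * T -> kappa0 ^+ 2 * T ^+ 2 <= M * dd) ->
  dd <= 2 * h + 2 * a ->
  h / 2 + dd / 2 + (A0 - 1) * (U + T) <= K0 * (a + B + M).
Proof.
move=> xi1 k0 hA.
have xi0p : 0 < xi0 by lra.
have xm1 : 0 < xi0 - 1 by lra.
have hA' : xi0 + 1 < A0 * (xi0 - 1) by rewrite -ltr_pdivrMr.
have A1 : 1 < A0 by nra.
set ix := xi0^-1.
have ixp : 0 < ix by rewrite invr_gt0.
have xix : xi0 * ix = 1 by rewrite mulfV // gt_eqF.
set del := A0 - 1 - (A0 + 1) * ix.
have delp : 0 < del.
  rewrite /del; have : (xi0 + 1) * ix < A0 * (xi0 - 1) * ix by rewrite ltr_pM2r.
  nra.
set ik := (kappa0 ^+ 2)^-1.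
have ikp : 0 < ik by rewrite invr_gt0 exprn_gt0.
have kik : kappa0 ^+ 2 * ik = 1 by rewrite mulfV // gt_eqF // exprn_gt0.
set c := 3 + (A0 - 1) * (1 + ix) / del.
have cp : 3 <= c.
  rewrite /c lerDl; apply: mulr_ge0; last by rewrite invr_ge0 ltW.
  apply: mulr_ge0; lra.
have cdel : c * del >= (A0 - 1) * (1 + ix).
  have e : (A0 - 1) * (1 + ix) / del * del = (A0 - 1) * (1 + ix) by rewrite divfK // gt_eqF.
  rewrite /c mulrDl; rewrite -/del; nra.
exists (6 + 12 * A0 + 48 * A0 ^+ 2 * ik + c + 2 * c * A0); split.
  have : 0 <= A0 ^+ 2 * ik by apply: mulr_ge0; [exact: sqr_ge0 | exact: ltW].
  nra.
move=> h a dd U T B M h0 a0 dd0 U0 T0 B0 M0 basic compat ddb.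
have K1 : 0 <= 48 * A0 ^+ 2 * ik.
  have : 0 <= A0 ^+ 2 * ik by apply: mulr_ge0; [exact: sqr_ge0 | exact: ltW].
  nra.
have [cone|ncone] := lerP U (xi0 * T).
  have cc := compat cone.
  set m := M * ik.
  have m0 : 0 <= m by apply: mulr_ge0 => //; exact: ltW.
  have T2 : T ^+ 2 <= 2 * m * (h + a).
    have : T ^+ 2 = (kappa0 ^+ 2 * T ^+ 2) * ik by rewrite mulrC mulrA [ik * _]mulrC kik mul1r.
    move=> ->; rewrite /m.
    have : kappa0 ^+ 2 * T ^+ 2 * ik <= M * dd * ik by rewrite ler_pM2r.
    have : M * dd * ik <= M * (2 * h + 2 * a) * ik.
      by rewrite ler_pM2r // ler_wpM2l.
    move=> H1 H2; apply: (le_trans H2); apply: (le_trans H1); rewrite le_eqVlt; apply/orP; left; apply/eqP; ring.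
  have X0 : 0 <= h + a by lra.
  have Y0 : 0 <= (h + a) / 4 + 8 * A0 ^+ 2 * m.
    have : 0 <= A0 ^+ 2 * m by apply: mulr_ge0 => //; exact: sqr_ge0.
    lra.
  have sq : (2 * A0 * T) ^+ 2 <= ((h + a) / 4 + 8 * A0 ^+ 2 * m) ^+ 2.
    have : 0 <= ((h + a) / 4 - 8 * A0 ^+ 2 * m) ^+ 2 by exact: sqr_ge0.
    have : A0 ^+ 2 * T ^+ 2 <= A0 ^+ 2 * (2 * m * (h + a)) by rewrite ler_wpM2l ?sqr_ge0.
    nra.
  have twoAT : 2 * A0 * T <= (h + a) / 4 + 8 * A0 ^+ 2 * m.
    by rewrite -(ler_pXn2r (isT : (0 < 2)%N)) // ?nnegrE //; nra.
  have : (A0 - 1) * (U + T) <= (A0 - 1) * U + (A0 - 1) * T by rewrite mulrDr.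
  have : 48 * A0 ^+ 2 * m = 48 * A0 ^+ 2 * ik * M by rewrite /m; ring.
  have : 0 <= c + 2 * c * A0 by nra.
  have : 0 <= (A0 - 1) * (U + T) by apply: mulr_ge0; lra.
  nra.
have T1 : T <= U * ix.
  have : xi0 * T * ix <= U * ix by rewrite ler_pM2r // ltW.
  by rewrite mulrAC xix mul1r.
have b2 : h / 2 + del * U <= a / 2 + 2 * A0 * B.
  have : (A0 + 1) * T <= (A0 + 1) * (U * ix) by rewrite ler_pM2l //; lra.
  rewrite /del; nra.
have : (A0 - 1) * (U + T) <= (A0 - 1) * (1 + ix) * U.
  have : (A0 - 1) * T <= (A0 - 1) * (U * ix) by rewrite ler_pM2l //; lra.
  nra.
have : c * (h / 2 + del * U) <= c * (a / 2 + 2 * A0 * B) by rewrite ler_pM2l //; lra.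
have : (A0 - 1) * (1 + ix) * U <= c * del * U by apply: ler_wpM2r.
move=> H1 H2 H3.
have H4 : 3 * (h / 2) <= c * (h / 2) by apply: ler_wpM2r => //; lra.
set K0 := 6 + 12 * A0 + 48 * A0 ^+ 2 * ik + c + 2 * c * A0.
have P1 : 0 <= (K0 - 1 - c / 2) * a by apply: mulr_ge0 => //; rewrite /K0; nra.
have P2 : 0 <= (K0 - 2 * c * A0) * B by apply: mulr_ge0 => //; rewrite /K0; nra.
have P3 : 0 <= K0 * M by apply: mulr_ge0 => //; rewrite /K0; nra.
have E1 : K0 * (a + B + M) = a + c * (a / 2 + 2 * A0 * B) + ((K0 - 1 - c / 2) * a + (K0 - 2 * c * A0) * B + K0 * M) by ring.
have E2 : c * (h / 2 + del * U) = c * (h / 2) + c * del * U by ring.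
rewrite E1.
have S1 : h / 2 + dd / 2 + (A0 - 1) * (U + T) <= 3 * (h / 2) + a + c * del * U.
  move: H1 H3 ddb; move: ((A0 - 1) * (U + T)) ((A0 - 1) * (1 + ix) * U) (c * del * U) => x y z; lra.
move: S1 H2 H4 E2 P1 P2 P3.
move: (h / 2 + dd / 2 + (A0 - 1) * (U + T)) (c * (h / 2 + del * U)) (c * (a / 2 + 2 * A0 * B)) (c * (h / 2)) (c * del * U) ((K0 - 1 - c / 2) * a) ((K0 - 2 * c * A0) * B) (K0 * M).
move=> x1 x2 x3 x4 x5 x6 x7 x8; lra.
Qed.


Lemma sum_sub_le {R : realType} p (P : pred 'I_p) (F : 'I_p -> R) :
  (forall j, 0 <= F j) -> \sum_(j < p | P j) F j <= \sum_(j < p) F j.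
Proof. move=> F0; rewrite [X in _ <= X](bigID P) /= lerDl; apply: sumr_ge0 => j _; exact: F0. Qed.

Lemma emp2_Y {R : realType} n D (X : 'I_n -> 'rV[R]_D) (gs g : 'rV[R]_D -> R) (e : 'I_n -> R) :
  emp2 (fun i : 'I_n => i) (fun i => gs (X i) + e i - g (X i)) =
  emp2 X (fun x => g x - gs x) - 2 * (n%:R^-1 * \sum_(i < n) e i * (g (X i) - gs (X i)))
  + n%:R^-1 * \sum_(i < n) e i ^+ 2.
Proof.
rewrite /emp2 [2 * (_ * _)]mulrCA -mulrBr -mulrDr; congr (_ * _).
rewrite mulr_sumr -sumrB -big_split /=; apply: eq_bigr => i _; ring.
Qed.

Lemma funB_sub {R : realType} dj (G : set ('rV[R]_dj -> R)) f g :
  fun_subspace G -> G f -> G g -> G (fun x => f x - g x).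
Proof.
move=> [_ [GD GZ]] Gf Gg.
have -> : (fun x => f x - g x) = (fun x => f x + (-1) * g x).
  by apply/funext => x; ring.
by apply: GD => //; apply: GZ.
Qed.

Lemma NF_sub {R : realType} dj (G : set ('rV[R]_dj -> R)) N f g :
  fun_subspace G -> seminorm_on G N -> G f -> G g ->
  N (fun x => f x - g x) <= N f + N g.
Proof.
move=> [G0 [GD GZ]] [N0 [NZ ND]] Gf Gg.
have -> : (fun x => f x - g x) = (fun x => f x + (-1) * g x).
  by apply/funext => x; ring.
apply: le_trans (ND _ _ Gf (GZ _ _ Gg)) _.
by rewrite NZ // normrN normr1 mul1r.
Qed.

Lemma empnorm_sub2 {R : realType} n (U : Type) (Z : 'I_n -> U) (f g : U -> R) :
  empnorm Z g <= empnorm Z f + empnorm Z (fun x => f x - g x).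
Proof.
apply: le_trans (@empnorm_tri R n U Z f (fun x => (-1) * (f x - g x)) g _) _.
  by move=> i; ring.
by rewrite empnorm_scale normrN normr1 mul1r.
Qed.

Lemma empnorm_sub {R : realType} n (U : Type) (Z : 'I_n -> U) (f g : U -> R) :
  empnorm Z (fun x => f x - g x) <= empnorm Z f + empnorm Z g.
Proof.
apply: le_trans (@empnorm_tri R n U Z f (fun x => (-1) * g x) _ _) _.
  by move=> i; ring.
by rewrite empnorm_scale normrN normr1 mul1r.
Qed.

Theorem corollary2 (R : realType) (q A0 C0 xi0 kappa0 : R) :
  0 <= q <= 1 -> 0 < C0 -> 0 < kappa0 -> 1 < xi0 ->
  (xi0 + 1) / (xi0 - 1) < A0 ->
  exists K : R,
  forall (n p D : nat) (d : 'I_p -> nat) (sel : forall j, 'I_(d j) -> 'I_D)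
    (X : 'I_n -> 'rV[R]_D)
    (G : forall j, set ('rV[R]_(d j) -> R))
    (NF : forall j, ('rV[R]_(d j) -> R) -> R)
    (dsp : measure_display) (Omega : measurableType dsp) (P : probability Omega R)
    (eps : 'I_n -> Omega -> R) (gstar : 'rV[R]_D -> R)
    (D0 D1 C1 epsilon : R) (w : 'I_p -> R) (psi : 'I_p -> R -> R)
    (gbar : forall j, 'rV[R]_(d j) -> R),
  (0 < n)%N -> (0 < p)%N ->
  (forall j, injective (sel j)) ->
  (forall j, fun_subspace (G j)) ->
  (forall j, seminorm_on (G j) (NF j)) ->
  (* sub-Gaussian noise condition, and C1 as in the maximal inequality *)
  subgaussian_noise P eps D0 D1 ->
  0 < C1 -> noise_maximal_ineq P X eps C1 ->
  (* entropy condition *)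
  (forall j delta, 0 < delta <= 1 ->
     (entropy_integral (design_j sel X j) (Gj_delta (design_j sel X j) (G j) (NF j) delta) delta
       <= (psi j delta)%:E)%E) ->
  (* tuning parameters *)
  0 < epsilon < 1 -> (forall j, 0 < w j <= 1) ->
  let lam := lambda_n n C1 epsilon psi w in
  let rho := rho_n n C1 epsilon psi w in
  (forall j, G j (gbar j)) ->
  let S := [set j : 'I_p | C0 * lam j < empnorm (design_j sel X j) (gbar j)]%SET in
  (* empirical compatibility condition for (S, kappa0, xi0) *)
  (forall f : forall j, 'rV[R]_(d j) -> R, (forall j, G j (f j)) ->
     \sum_(j < p) lam j * w j * NF j (f j)
       + \sum_(j < p | j \notin S) lam j * empnorm (design_j sel X j) (f j)
     <= xi0 * \sum_(j < p | j \in S) lam j * empnorm (design_j sel X j) (f j) ->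
     kappa0 ^+ 2 * (\sum_(j < p | j \in S) lam j * empnorm (design_j sel X j) (f j)) ^+ 2
     <= (\sum_(j < p | j \in S) lam j ^+ 2) * emp2 X (add_comp sel f)) ->
  (* conclusion: with probability at least 1 - epsilon, every minimizer satisfies the bound *)
  exists E : set Omega, measurable E /\ ((1 - epsilon)%:E <= P E)%E /\
  forall omega, E omega ->
  forall gh : forall j, 'rV[R]_(d j) -> R,
    (forall j, G j (gh j)) ->
    (forall g : forall j, 'rV[R]_(d j) -> R, (forall j, G j (g j)) ->
       emp2 (fun i : 'I_n => i)
            (fun i => gstar (X i) + eps i omega - add_comp sel gh (X i)) / 2
         + A0 * penalty sel X NF lam rho gh
       <= emp2 (fun i : 'I_n => i)
            (fun i => gstar (X i) + eps i omega - add_comp sel g (X i)) / 2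
         + A0 * penalty sel X NF lam rho g) ->
    emp2 X (fun x => add_comp sel gh x - gstar x) / 2
      + emp2 X (fun x => add_comp sel gh x - add_comp sel gbar x) / 2
      + (A0 - 1) * penalty sel X NF lam rho (cdiff gh gbar)
    <= K * (emp2 X (fun x => add_comp sel gbar x - gstar x)
            + \sum_(j < p) (rho j * NF j (gbar j)
                 + pow00 (lam j) (2 - q)
                   * pow00 (empnorm (design_j sel X j) (gbar j)) q)).
Proof.
move=> /andP[q0 q1] C0p k0 xi1 hA.
have [K0 [K00 HK0]] := @det R A0 xi0 kappa0 xi1 k0 hA.
set c1 := C0 `^ (1 - q).
set c2 := (C0^-1) `^ q.
have c10 : 0 <= c1 by exact: powR_ge0.
have c20 : 0 <= c2 by exact: powR_ge0.
exists (K0 * (1 + c1 + c2)).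
move=> n p D d sel X G NF dsp Omega P eps gstar D0 D1 C1 epsilon w psi gbar
  n0 p0 selinj Gsub Gsn Hnoise C1p Hmax Hent He Hw lam rho Gbar S Hcomp.
have [E [mE [PE HE]]] := @noise_event R n p D d sel X G NF dsp Omega P eps C1 epsilon w psi n0 p0 Gsub Gsn C1p Hmax Hent He Hw.
exists E; split => //; split => // omega Eo gh Ggh Hmin.
set Dl := cdiff gh gbar.
have GD j : G j (Dl j) by apply: funB_sub.
have wp j : 0 < w j by case/andP: (Hw j).
have psi0 j : 0 <= psi j (w j).
  have := Hent j (w j) (Hw j); rewrite -lee_fin; apply: le_trans; exact: entropy_ge0.
have lamp j : 0 < lam j by apply: lam_gt0 => //.
have NF0 j f : G j f -> 0 <= NF j f by move=> Gf; exact: (Gsn j).1 f Gf.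
pose NS (f : forall j, 'rV[R]_(d j) -> R) := \sum_(j < p) lam j * w j * NF j (f j).
pose LS (f : forall j, 'rV[R]_(d j) -> R) :=
  \sum_(j < p | j \in S) lam j * empnorm (design_j sel X j) (f j).
pose LN (f : forall j, 'rV[R]_(d j) -> R) :=
  \sum_(j < p | j \notin S) lam j * empnorm (design_j sel X j) (f j).
have penE f : penalty sel X NF lam rho f = NS f + LS f + LN f.
  by rewrite /penalty big_split /= [X in _ + X](bigID (fun j => j \in S)) /= addrA.
have NSge0 f : (forall j, G j (f j)) -> 0 <= NS f.
  move=> Gf; apply: sumr_ge0 => j _; apply: mulr_ge0; last exact: NF0.
  by apply: mulr_ge0; apply: ltW.
have LSge0 f : 0 <= LS f.
  by apply: sumr_ge0 => j _; apply: mulr_ge0; [exact: ltW|exact: empnorm_ge0].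
have LNge0 f : 0 <= LN f.
  by apply: sumr_ge0 => j _; apply: mulr_ge0; [exact: ltW|exact: empnorm_ge0].
pose h := emp2 X (fun x => add_comp sel gh x - gstar x).
pose a := emp2 X (fun x => add_comp sel gbar x - gstar x).
pose dd := emp2 X (fun x => add_comp sel gh x - add_comp sel gbar x).
pose U := NS Dl + LN Dl.
pose T := LS Dl.
pose B := NS gbar + LN gbar.
pose M := \sum_(j < p | j \in S) lam j ^+ 2.
have addD x : add_comp sel Dl x = add_comp sel gh x - add_comp sel gbar x.
  by rewrite /add_comp -sumrB.
have Hb := Hmin gbar Gbar.
rewrite !emp2_Y in Hb.
have Hn := HE omega Eo Dl GD.
have NI : n%:R^-1 * \sum_(i < n) eps i omega * (add_comp sel gh (X i) - gstar (X i))
  - n%:R^-1 * \sum_(i < n) eps i omega * (add_comp sel gbar (X i) - gstar (X i))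
  = n%:R^-1 * \sum_(i < n) eps i omega * add_comp sel Dl (X i).
  rewrite -mulrBr -sumrB; congr (_ * _); apply: eq_bigr => i _; rewrite addD; ring.
have Nle := ler_norm (n%:R^-1 * \sum_(i < n) eps i omega * add_comp sel Dl (X i)).
have hb1 : h / 2 <= a / 2 + penalty sel X NF lam rho Dl
    + A0 * (penalty sel X NF lam rho gbar - penalty sel X NF lam rho gh).
  rewrite mulrBr; rewrite -/h -/a in Hb; lra.
have I1 : NS Dl <= NS gh + NS gbar.
  rewrite /NS -big_split /=; apply: ler_sum => j _; rewrite -mulrDr.
  apply: ler_wpM2l; first by apply: mulr_ge0; apply: ltW.
  exact: NF_sub.
have I2 : LS gbar <= LS gh + LS Dl.
  rewrite /LS -big_split /=; apply: ler_sum => j _; rewrite -mulrDr.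
  apply: ler_wpM2l; first exact: ltW.
  exact: empnorm_sub2.
have I3 : LN Dl <= LN gh + LN gbar.
  rewrite /LN -big_split /=; apply: ler_sum => j _; rewrite -mulrDr.
  apply: ler_wpM2l; first exact: ltW.
  exact: empnorm_sub.
have pdiff : penalty sel X NF lam rho gbar - penalty sel X NF lam rho gh <= 2 * B - U + T.
  rewrite !penE /B /U /T; lra.
have A00 : 0 <= A0.
  have : 0 < (xi0 + 1) / (xi0 - 1) by apply: divr_gt0; lra.
  lra.
have hb2 := ler_wpM2l A00 pdiff.
have E1 : a / 2 + (U + T) + A0 * (2 * B - U + T)
   = a / 2 + 2 * A0 * B + (A0 + 1) * T - (A0 - 1) * U by ring.
have basic : h / 2 + (A0 - 1) * U <= a / 2 + 2 * A0 * B + (A0 + 1) * T.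
  have : penalty sel X NF lam rho Dl = U + T by rewrite penE /U /T; ring.
  move=> pDl; rewrite pDl in hb1; lra.
have compat : U <= xi0 * T -> kappa0 ^+ 2 * T ^+ 2 <= M * dd.
  move=> cone; have := Hcomp Dl GD cone.
  by rewrite (@eq_emp2 R n _ X _ (fun x => add_comp sel gh x - add_comp sel gbar x)) // => i; rewrite addD.
have ddb : dd <= 2 * h + 2 * a.
  have := @emp2_add_le R n _ X (fun x => add_comp sel gh x - gstar x)
    (fun x => gstar x - add_comp sel gbar x) (fun x => add_comp sel gh x - add_comp sel gbar x).
  have -> : emp2 X (fun x => gstar x - add_comp sel gbar x) = a.
    rewrite (@eq_emp2 R n _ X _ (fun x => (-1) * (add_comp sel gbar x - gstar x))); last by move=> i; ring.
    by rewrite emp2_scale sqrrN expr1n mul1r.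
  by apply => i; ring.
have key := HK0 h a dd U T B M (emp2_ge0 _ _ _ _) (emp2_ge0 _ _ _ _) (emp2_ge0 _ _ _ _)
  (addr_ge0 (NSge0 _ GD) (LNge0 _)) (LSge0 _) (addr_ge0 (NSge0 _ Gbar) (LNge0 _))
  (sumr_ge0 _ (fun j _ => sqr_ge0 _)) basic compat ddb.
have -> : penalty sel X NF lam rho (cdiff gh gbar) = U + T by rewrite penE /U /T; ring.
apply: (le_trans key).
pose pw j := pow00 (lam j) (2 - q) * pow00 (empnorm (design_j sel X j) (gbar j)) q.
have pw0 j : 0 <= pw j by apply: mulr_ge0; exact: pow00_ge0.
pose Pq := \sum_(j < p) pw j.
have -> : \sum_(j < p) (rho j * NF j (gbar j) + pow00 (lam j) (2 - q)
                 * pow00 (empnorm (design_j sel X j) (gbar j)) q) = NS gbar + Pq.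
  by rewrite big_split.
have LNb : LN gbar <= c1 * Pq.
  rewrite /Pq mulr_sumr.
  apply: (@le_trans _ _ (\sum_(j < p | j \notin S) c1 * pw j)); last first.
    by apply: sum_sub_le => j; apply: mulr_ge0.
  apply: ler_sum => j jS; apply: pow_notS => //; first exact: empnorm_ge0.
    by move: jS; rewrite inE -leNgt.
  by rewrite q0 q1.
have Mb : M <= c2 * Pq.
  rewrite /Pq mulr_sumr.
  apply: (@le_trans _ _ (\sum_(j < p | j \in S) c2 * pw j)); last first.
    by apply: sum_sub_le => j; apply: mulr_ge0.
  apply: ler_sum => j jS; apply: pow_S => //.
  by move: jS; rewrite inE.
have a0 : 0 <= a by exact: (emp2_ge0 _ _ _ _).
have NSb0 := NSge0 _ Gbar.
have Pq0 : 0 <= Pq by apply: sumr_ge0 => j _.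
have : 0 <= (c1 + c2) * (a + NS gbar) by apply: mulr_ge0; lra.
have E2 : (1 + c1 + c2) * (a + (NS gbar + Pq)) = a + NS gbar + (c1 + c2) * (a + NS gbar) + Pq + c1 * Pq + c2 * Pq by ring.
move=> P1.
have : a + B + M <= (1 + c1 + c2) * (a + (NS gbar + Pq)) by rewrite E2 /B; lra.
move=> H; rewrite -mulrA; exact: ler_wpM2l.
Qed.
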